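(* Let $\Sigma$ be an arbitrary group and $A$ a difference ring, and let $X=\operatorname{PSpec}A$ with the topology whose closed sets are the sets $V(E)$, $E\subseteq A$. For $s\in A$ let $X_s=X\setminus V(s)$. Then: (1) for all $s,t\in A$, $X_s\cap X_t=\bigcup_{\sigma,\tau\in\Sigma}X_{\sigma(s)\tau(t)}$; (2) $X_s=\emptyset$ if and only if $s$ is nilpotent; (3) $X$ is quasi-compact; (4) the maps $\mathfrak t\mapsto V(\mathfrak t)$ and $Z\mapsto\bigcap_{\mathfrak q\in Z}\mathfrak q$ are mutually inverse bijections between the set of radical difference ideals of $A$ and the set of closed subsets of $X$.
   Context: Let $\Sigma$ be a group. A difference ring is a commutative ring $A$ with identity together with an action of $\Sigma$ on $A$ by ring automorphisms. A difference ideal is an ideal $\mathfrak a$ with $\sigma(\mathfrak a)\subseteq\mathfrak a$ for all $\sigma\in\Sigma$. A difference ideal $\mathfrak q$ is pseudoprime if there is a multiplicatively closed subset $S\subseteq A$ with $1\in S$ such that $\mathfrak q$ is maximal among difference ideals of $A$ not meeting $S$. $\operatorname{PSpec}A$ denotes the set of pseudoprime ideals of $A$, and for $E\subseteq A$, $V(E)$ is the set of pseudoprime ideals containing $E$; these sets are the closed sets of a topology on $\operatorname{PSpec}A$. *)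

(* Defs.v *)
(* Subsets of A are predicates A -> Prop; points of PSpec A
   are predicates q : A -> Prop satisfying [pseudoprime act q]. *)
From Stdlib Require Import List.
From HB Require Import structures.
From mathcomp Require Import all_boot all_order all_algebra.
Set Implicit Arguments. Unset Strict Implicit. Unset Printing Implicit Defensive.
Import GRing.Theory.
Local Open Scope ring_scope.

Record is_group (G : Type) (mul : G -> G -> G) (one : G) (inv : G -> G) : Prop := {
  grp_assoc : forall x y z, mul x (mul y z) = mul (mul x y) z;
  grp_id_l  : forall x, mul one x = x;
  grp_inv_l : forall x, mul (inv x) x = one }.

(* An action of the group on the ring A by ring automorphisms
   (ring endomorphisms forming a group action are automatically bijective). *)
Record is_difference_action (G : Type) (mul : G -> G -> G) (one : G)
    (A : comPzRingType) (act : G -> A -> A) : Prop := {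
  act_add  : forall g a b, act g (a + b) = act g a + act g b;
  act_mulr : forall g a b, act g (a * b) = act g a * act g b;
  act_1    : forall g, act g 1 = 1;
  act_one  : forall a, act one a = a;
  act_comp : forall g h a, act (mul g h) a = act g (act h a) }.

Section Ideals.
Variables (G : Type) (A : comPzRingType) (act : G -> A -> A).

Definition is_ideal (I : A -> Prop) : Prop :=
  I 0 /\ (forall a b, I a -> I b -> I (a + b)) /\ (forall r a, I a -> I (r * a)).

Definition is_diff_ideal (I : A -> Prop) : Prop :=
  is_ideal I /\ (forall g a, I a -> I (act g a)).

Definition is_mult_closed (S : A -> Prop) : Prop :=
  S 1 /\ (forall a b, S a -> S b -> S (a * b)).

Definition disjoint_from (I S : A -> Prop) : Prop := forall a, I a -> S a -> False.

Definition pseudoprime (q : A -> Prop) : Prop :=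
  exists S : A -> Prop, is_mult_closed S /\
    is_diff_ideal q /\ disjoint_from q S /\
    (forall J, is_diff_ideal J -> disjoint_from J S ->
       (forall a, q a -> J a) -> forall a, J a -> q a).

Definition Vset (E : A -> Prop) (q : A -> Prop) : Prop :=
  pseudoprime q /\ forall a, E a -> q a.

Definition Xs (s : A) (q : A -> Prop) : Prop :=
  pseudoprime q /\ ~ q s.

Definition is_closed (Z : (A -> Prop) -> Prop) : Prop :=
  exists E : A -> Prop, forall q, Z q <-> Vset E q.

Definition bigcap_ideals (Z : (A -> Prop) -> Prop) (a : A) : Prop :=
  forall q, Z q -> q a.

Definition is_radical_diff_ideal (t : A -> Prop) : Prop :=
  is_diff_ideal t /\ forall a (n : nat), t (a ^+ n) -> t a.

(* quasi-compactness, phrased with the open sets X \ V(E) *)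
Definition PSpec_quasi_compact : Prop :=
  forall (I : Type) (E : I -> A -> Prop),
    (forall q, pseudoprime q -> exists i, ~ Vset (E i) q) ->
    exists l : list I, forall q, pseudoprime q ->
      exists i, List.In i l /\ ~ Vset (E i) q.

End Ideals.

(* Main.v *)
Require Import Defs.
From Stdlib Require Import ClassicalEpsilon Classical FunctionalExtensionality PropExtensionality.
From Stdlib Require List.
From HB Require Import structures.
From mathcomp Require Import all_boot all_order all_algebra.
Set Implicit Arguments. Unset Strict Implicit. Unset Printing Implicit Defensive.
Import GRing.Theory.
Local Open Scope ring_scope.

Definition subp (T : Type) (X Y : T -> Prop) := forall a, X a -> Y a.
Definition Ucup (T : Type) (I : T -> Prop) (C : (T -> Prop) -> Prop) (a : T) :=
  I a \/ exists X, C X /\ X a.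

Definition zsucc (T : Type) (adm : (T -> Prop) -> Prop) (X : T -> Prop) : T -> Prop :=
  epsilon (inhabits X) (fun Y => (adm Y /\ subp X Y /\ ~ subp Y X) \/
     (~ (exists Z, adm Z /\ subp X Z /\ ~ subp Z X) /\ Y = X)).

Lemma zsucc_spec (T : Type) (adm : (T -> Prop) -> Prop) (X : T -> Prop) :
  (adm (zsucc adm X) /\ subp X (zsucc adm X) /\ ~ subp (zsucc adm X) X) \/
  (~ (exists Z, adm Z /\ subp X Z /\ ~ subp Z X) /\ zsucc adm X = X).
Proof.
  unfold zsucc. apply epsilon_spec.
  destruct (classic (exists Z, adm Z /\ subp X Z /\ ~ subp Z X)) as [[Z HZ]|HN].
  - exists Z. left. exact HZ.
  - exists X. right. auto.
Qed.

Lemma zsucc_incl (T : Type) (adm : (T -> Prop) -> Prop) (X : T -> Prop) :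
  subp X (zsucc adm X).
Proof.
  destruct (zsucc_spec adm X) as [[_ [H _]]|[_ H]]; [exact H|].
  rewrite H. intros a Ha; exact Ha.
Qed.

Inductive tower (T : Type) (adm : (T -> Prop) -> Prop) (I : T -> Prop) : (T -> Prop) -> Prop :=
| tw_f : forall X, tower adm I X -> tower adm I (zsucc adm X)
| tw_U : forall C, (forall X, C X -> tower adm I X) -> tower adm I (Ucup I C).

Lemma tower_I (T : Type) adm (I : T -> Prop) X : tower adm I X -> subp I X.
Proof.
  induction 1 as [X _ IH|C _ IH].
  - intros a Ha. apply zsucc_incl. auto.
  - intros a Ha. left. exact Ha.
Qed.

Definition extreme (T : Type) adm (I : T -> Prop) c :=
  forall x, tower adm I x -> subp x c -> ~ subp c x -> subp (zsucc adm x) c.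

Lemma subp_eq (T : Type) (X Y : T -> Prop) : subp X Y -> subp Y X -> X = Y.
Proof.
  intros H1 H2. apply functional_extensionality. intro a.
  apply propositional_extensionality. split; auto.
Qed.

Lemma extreme_cmp (T : Type) adm (I : T -> Prop) c :
  tower adm I c -> extreme adm I c ->
  forall x, tower adm I x -> subp x c \/ subp (zsucc adm c) x.
Proof.
  intros Hc Hext x Hx. induction Hx as [y Hy IH|C HC IH].
  - destruct IH as [H|H].
    + destruct (classic (subp c y)) as [H2|H2].
      * right. rewrite (subp_eq H H2). intros a Ha; exact Ha.
      * left. apply Hext; auto.
    + right. intros a Ha. apply zsucc_incl. auto.
  - destruct (classic (exists y, C y /\ subp (zsucc adm c) y)) as [[y [Hy1 Hy2]]|HN].
    + right. intros a Ha. right. exists y. auto.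
    + left. intros a [Ha|[y [Hy Hya]]].
      * apply (tower_I Hc). exact Ha.
      * destruct (IH y Hy) as [H|H]; [auto|].
        exfalso. apply HN. exists y. auto.
Qed.

Lemma all_extreme (T : Type) adm (I : T -> Prop) c :
  tower adm I c -> extreme adm I c.
Proof.
  intro Hc. induction Hc as [d Hd IH|C HC IH].
  - intros x Hx H1 H2.
    destruct (extreme_cmp Hd IH Hx) as [H|H]; [|contradiction].
    destruct (classic (subp d x)) as [H3|H3].
    + rewrite (subp_eq H H3). intros a Ha; exact Ha.
    + intros a Ha. apply zsucc_incl. apply (IH x Hx H H3). exact Ha.
  - intros x Hx H1 H2.
    destruct (classic (exists y, C y /\ ~ subp y x)) as [[y [Hy Hyx]]|HN].
    + destruct (extreme_cmp (HC y Hy) (IH y Hy) Hx) as [H|H].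
      * intros a Ha. right. exists y. split; auto. apply (IH y Hy x Hx H Hyx). exact Ha.
      * exfalso. apply Hyx. intros a Ha. apply H. apply zsucc_incl. exact Ha.
    + exfalso. apply H2. intros a [Ha|[y [Hy Hya]]].
      * apply (tower_I Hx). exact Ha.
      * destruct (classic (subp y x)) as [H|H]; [auto|].
        exfalso; apply HN; exists y; auto.
Qed.

Lemma tower_chain (T : Type) adm (I : T -> Prop) x y :
  tower adm I x -> tower adm I y -> subp x y \/ subp y x.
Proof.
  intros Hx Hy. destruct (extreme_cmp Hy (all_extreme Hy) Hx) as [H|H]; auto.
  right. intros a Ha. apply H. apply zsucc_incl. exact Ha.
Qed.

Lemma zorn_pred (T : Type) (adm : (T -> Prop) -> Prop) (I : T -> Prop) :
  adm I ->
  (forall C : (T -> Prop) -> Prop, (forall X, C X -> adm X /\ subp I X) ->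
     (forall X Y, C X -> C Y -> subp X Y \/ subp Y X) -> adm (Ucup I C)) ->
  exists M, adm M /\ subp I M /\ forall J, adm J -> subp M J -> subp J M.
Proof.
  intros HI HU.
  assert (Hadm : forall X, tower adm I X -> adm X).
  { induction 1 as [X HX IH|C HC IH].
    - destruct (zsucc_spec adm X) as [[H _]|[_ H]]; [exact H|]. rewrite H; exact IH.
    - apply HU.
      + intros X HX. split; [auto|]. apply (tower_I (HC X HX)).
      + intros X Y HX HY. apply (tower_chain (HC X HX) (HC Y HY)). }
  set (M := Ucup I (tower adm I)).
  assert (HM : tower adm I M) by (apply tw_U; auto).
  exists M. split; [auto|]. split; [intros a Ha; left; exact Ha|].
  intros J HJ HMJ.
  destruct (classic (subp J M)) as [H|H]; [exact H|exfalso].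
  destruct (zsucc_spec adm M) as [[_ [_ H2]]|[H2 _]].
  - apply H2. intros a Ha. right. exists (zsucc adm M). split; auto. apply tw_f; auto.
  - apply H2. exists J. auto.
Qed.
Lemma id_mulr (A : comPzRingType) (I : A -> Prop) a r : is_ideal I -> I a -> I (a * r).
Proof. move=> [_ [_ H]] Ha; rewrite mulrC; exact: H. Qed.

Lemma id_muln (A : comPzRingType) (I : A -> Prop) a k : is_ideal I -> I a -> I (a *+ k).
Proof.
move=> HI Ha; elim: k => [|k IH]; first by rewrite mulr0n; case: HI.
by rewrite mulrS; case: HI => _ [H _]; apply: H.
Qed.

Lemma id_sum (A : comPzRingType) (I : A -> Prop) n (F : 'I_n -> A) :
  is_ideal I -> (forall i, I (F i)) -> I (\sum_(i < n) F i).
Proof.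
move=> HI; elim: n F => [|n IH] F HF; first by rewrite big_ord0; case: HI.
rewrite big_ord_recr /=; case: HI => _ [H _]; apply: H; last exact: HF.
by apply: IH => i; apply: HF.
Qed.

Lemma act0 G mul one (A : comPzRingType) (act : G -> A -> A) g :
  is_difference_action mul one act -> act g 0 = 0.
Proof.
move=> Hact; apply/(@addrI _ (act g 0)); rewrite addr0 -(act_add Hact) addr0 //.
Qed.

Lemma actX G mul one (A : comPzRingType) (act : G -> A -> A) g x n :
  is_difference_action mul one act -> act g (x ^+ n) = act g x ^+ n.
Proof.
move=> Hact; elim: n => [|n IH]; first by rewrite !expr0 (act_1 Hact).
by rewrite !exprS (act_mulr Hact) IH.
Qed.

Fixpoint lc G (A : comPzRingType) (act : G -> A -> A) (l : list (A * G * A)) : A :=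
  match l with nil => 0 | cons p l => p.1.1 * act p.1.2 p.2 + lc act l end.

Definition gen G (A : comPzRingType) (act : G -> A -> A) (E : A -> Prop) (a : A) : Prop :=
  exists l, (forall p, List.In p l -> E p.2) /\ a = lc act l.

Lemma lc_cat G (A : comPzRingType) (act : G -> A -> A) l m :
  lc act (l ++ m) = lc act l + lc act m.
Proof. by elim: l => [|p l IH] /=; rewrite ?add0r // IH addrA. Qed.

Lemma lc_mulr G (A : comPzRingType) (act : G -> A -> A) r l :
  r * lc act l = lc act (map (fun p => (r * p.1.1, p.1.2, p.2)) l).
Proof. by elim: l => [|p l IH] /=; rewrite ?mulr0 // mulrDr IH mulrA. Qed.

Lemma lc_act G mul one (A : comPzRingType) (act : G -> A -> A) g l :
  is_difference_action mul one act ->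
  act g (lc act l) = lc act (map (fun p => (act g p.1.1, mul g p.1.2, p.2)) l).
Proof.
move=> Hact; elim: l => [|p l IH] /=; first exact: act0 Hact.
by rewrite (act_add Hact) (act_mulr Hact) IH (act_comp Hact).
Qed.

Lemma In_map_inv (T U : Type) (f : T -> U) (l : list T) y :
  List.In y (map f l) -> exists x, List.In x l /\ y = f x.
Proof.
elim: l => [|x l IH] //= [H|H]; first by exists x; split; [left|].
by case: (IH H) => z [Hz ->]; exists z; split; [right|].
Qed.

Lemma gen_diff G mul one (A : comPzRingType) (act : G -> A -> A) (E : A -> Prop) :
  is_difference_action mul one act -> is_diff_ideal act (gen act E).
Proof.
move=> Hact; split; [split; [|split]|].
- by exists nil.
- move=> a b [l [Hl ->]] [m [Hm ->]]; exists (l ++ m); split; last by rewrite lc_cat.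
  by move=> p Hp; case: (List.in_app_or _ _ _ Hp) => H; [apply: Hl|apply: Hm].
- move=> r a [l [Hl ->]]; exists (map (fun p => (r * p.1.1, p.1.2, p.2)) l).
  split; last by apply: lc_mulr.
  move=> p Hp; case: (In_map_inv Hp) => x [Hx Hpx]; rewrite Hpx /=; exact: Hl.
- move=> g a [l [Hl ->]]; exists (map (fun p => (act g p.1.1, mul g p.1.2, p.2)) l).
  split; last exact: (lc_act g l Hact).
  move=> p Hp; case: (In_map_inv Hp) => x [Hx Hpx]; rewrite Hpx /=; exact: Hl.
Qed.

Lemma gen_incl G mul one (A : comPzRingType) (act : G -> A -> A) (E : A -> Prop) a :
  is_difference_action mul one act -> E a -> gen act E a.
Proof.
move=> Hact Ha; exists (cons (1, one, a) nil); split.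
  by move=> p [<-|[]].
by rewrite /= mul1r addr0 (act_one Hact).
Qed.

Lemma lc_in G (A : comPzRingType) (act : G -> A -> A) (D : A -> Prop) l :
  is_diff_ideal act D -> (forall p, List.In p l -> D p.2) -> D (lc act l).
Proof.
move=> [[H0 [HD HM]] HA]; elim: l => [|p l IH] //= Hl.
apply: HD; last by apply: IH => x Hx; apply: Hl; right.
by apply: HM; apply: HA; apply: Hl; left.
Qed.

Lemma lc_mul_in G (A : comPzRingType) (act : G -> A -> A) (q : A -> Prop) l m :
  is_ideal q ->
  (forall p p', List.In p l -> List.In p' m -> q (act p.1.2 p.2 * act p'.1.2 p'.2)) ->
  q (lc act l * lc act m).
Proof.
move=> HI; have [H0 [HD HM]] := HI.
elim: l => [|p l IH] /= Hl; first by rewrite mul0r.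
rewrite mulrDl; apply: (HD); last by apply: IH => x y Hx Hy; apply: (Hl) => //; right.
rewrite -mulrA; apply: (HM).
have: forall p', List.In p' m -> q (act p.1.2 p.2 * act p'.1.2 p'.2).
  by move=> p' Hp'; apply: (Hl) => //; left.
elim: m {Hl IH} => [|p' m IHm] /= Hm; first by rewrite mulr0.
rewrite mulrDr; apply: (HD); last by apply: IHm => x Hx; apply: (Hm); right.
by rewrite mulrCA; apply: (HM); apply: (Hm); left.
Qed.
Lemma pp_prime G mul one (A : comPzRingType) (act : G -> A -> A) (q : A -> Prop) a b :
  is_difference_action mul one act ->
  pseudoprime act q -> ~ q a -> ~ q b -> exists g h, ~ q (act g a * act h b).
Proof.
move=> Hact [S [HS [Hq [Hdis Hmax]]]] Ha Hb.
apply: NNPP => Hn.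
have H: forall g h, q (act g a * act h b).
  by move=> g h; apply: NNPP => H; apply: Hn; exists g, h; exact H.
have meet: forall c, ~ q c -> exists l,
    (forall p, List.In p l -> q p.2 \/ p.2 = c) /\ S (lc act l).
  move=> c Hc; apply: NNPP => Hne.
  have Hd : disjoint_from (gen act (fun y => q y \/ y = c)) S.
    by move=> x [l [Hl ->]] Hs; apply: Hne; exists l; split.
  apply: Hc; apply: (Hmax _ (gen_diff _ Hact) Hd).
  - by move=> x Hx; apply: (gen_incl Hact); left.
  - by apply: (gen_incl Hact); right.
case: (meet a Ha) => l [Hl Sl]; case: (meet b Hb) => m [Hm Sm].
apply: (Hdis (lc act l * lc act m)); last by case: HS => _ HS; apply: HS.
have Hid := Hq.1.
apply: lc_mul_in => //.
move=> p p' Hp Hp'; case: (Hl p Hp) => [Hq1|->].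
  by apply: id_mulr => //; apply: Hq.2.
case: (Hm p' Hp') => [Hq2|->]; last exact: H.
by rewrite mulrC; apply: id_mulr => //; apply: Hq.2.
Qed.

Lemma mc_pow (A : comPzRingType) (S : A -> Prop) x n :
  is_mult_closed S -> S x -> S (x ^+ n).
Proof.
move=> [H1 HM] Hx; elim: n => [|n IH]; first by rewrite expr0.
by rewrite exprS; apply: HM.
Qed.

Lemma pp_rad G mul one (A : comPzRingType) (act : G -> A -> A) (q : A -> Prop) a n :
  is_difference_action mul one act ->
  pseudoprime act q -> q (a ^+ n) -> q a.
Proof.
move=> Hact [S [HS [Hq [Hdis Hmax]]]] Han.
have [[H0 [HD HM]] HA] := Hq.
have Hid : is_ideal q := Hq.1.
pose R x := exists n, q (x ^+ n).
have HR : is_diff_ideal act R.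
  split; [split; [|split]|].
  - by exists 1%N; rewrite expr1.
  - move=> x y [m Hx] [k Hy]; exists (m + k)%N; rewrite exprDn.
    apply: id_sum => // i; apply: id_muln => //.
    case: (leqP k i) => Hki.
      have ->: y ^+ i = y ^+ k * y ^+ (i - k) by rewrite -exprD subnKC.
      by rewrite mulrA; apply: id_mulr => //; apply: (HM).
    have ->: (m + k - i = m + (k - i))%N by rewrite addnBA // ltnW.
    by rewrite exprD -mulrA mulrC; apply: (HM).
  - by move=> r x [m Hx]; exists m; rewrite exprMn; apply: (HM).
  - by move=> g x [m Hx]; exists m; rewrite -(actX g x m Hact); apply: (HA).
have HdR : disjoint_from R S.
  by move=> x [m Hx] Hs; apply: (Hdis _ Hx); apply: mc_pow.
apply: (Hmax R HR HdR); first by move=> x Hx; exists 1%N; rewrite expr1.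
by exists n.
Qed.

Lemma exists_pp G (A : comPzRingType) (act : G -> A -> A) (I S : A -> Prop) :
  is_diff_ideal act I -> is_mult_closed S -> disjoint_from I S ->
  exists q, pseudoprime act q /\ (forall a, I a -> q a) /\ disjoint_from q S.
Proof.
move=> HI HS HdI.
pose adm (X : A -> Prop) := is_diff_ideal act X /\ disjoint_from X S.
have [M [[HMd HMs] [HIM HMmax]]] : exists M, adm M /\ subp I M /\
    forall J, adm J -> subp M J -> subp J M.
  apply: zorn_pred; first by split.
  move=> C HC Hch; split.
  - have [[I0 [ID IM]] IA] := HI.
    split; [split; [|split]|].
    + by left.
    + move=> x y [Hx|[X [HX Hx]]] [Hy|[Y [HY Hy]]].
      * by left; apply: ID.
      * right; exists Y; split => //; have [[[[_ [D _]] _] _] _] := HC Y HY.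
        by apply: D => //; apply: (HC Y HY).2.
      * right; exists X; split => //; have [[[[_ [D _]] _] _] _] := HC X HX.
        by apply: D => //; apply: (HC X HX).2.
      * right; case: (Hch X Y HX HY) => Hs.
          exists Y; split => //; have [[[[_ [D _]] _] _] _] := HC Y HY.
          by apply: D => //; apply: Hs.
        exists X; split => //; have [[[[_ [D _]] _] _] _] := HC X HX.
        by apply: D => //; apply: Hs.
    + move=> r x [Hx|[X [HX Hx]]]; first by left; apply: IM.
      right; exists X; split => //; have [[[[_ [_ D]] _] _] _] := HC X HX.
      by apply: D.
    + move=> g x [Hx|[X [HX Hx]]]; first by left; apply: IA.
      right; exists X; split => //; have [[_ D] _] := (HC X HX).1.
      by apply: D.
  - move=> x [Hx|[X [HX Hx]]] Hs; first exact: (HdI x).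
    by have [[_ D] _] := HC X HX; apply: (D x).
exists M; split; last by split.
exists S; split => //; split => //; split => //.
move=> J HJ HJs HMJ; apply: HMmax => //.
Qed.
Lemma pp_diff G (A : comPzRingType) (act : G -> A -> A) q :
  pseudoprime act q -> is_diff_ideal act q.
Proof. by move=> [S [_ [H _]]]. Qed.

Lemma pp_not1 G (A : comPzRingType) (act : G -> A -> A) q :
  pseudoprime act q -> ~ q 1.
Proof. by move=> [S [[HS1 _] [_ [Hd _]]]] H; apply: (Hd 1). Qed.

Lemma pow_mc (A : comPzRingType) (a : A) : is_mult_closed (fun x => exists n, x = a ^+ n).
Proof.
split; first by exists 0%N; rewrite expr0.
by move=> x y [m ->] [n ->]; exists (m + n)%N; rewrite exprD.
Qed.

Lemma extract_list (T I : Type) (P : I -> T -> Prop) (l : list T) :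
  (forall p, List.In p l -> exists i, P i p) ->
  exists li : list I, forall p, List.In p l -> exists i, List.In i li /\ P i p.
Proof.
elim: l => [|p l IH] H; first by exists nil.
case: IH => [x Hx|li Hli]; first by apply: H; right.
case: (H p) => [|i Hi]; first by left.
exists (cons i li) => x [<-|Hx]; first by exists i; split; [left|].
by case: (Hli x Hx) => j [Hj Pj]; exists j; split; [right|].
Qed.

Theorem proposition3p3 (G : Type) (mul : G -> G -> G) (one : G) (inv : G -> G)
    (A : comPzRingType) (act : G -> A -> A)
    (HG : is_group mul one inv) (Hact : is_difference_action mul one act) :
  (* (1) *)
  (forall (s t : A) (q : A -> Prop),
      (Xs act s q /\ Xs act t q) <->
      (exists g h : G, Xs act (act g s * act h t) q)) /\
  (* (2) *)
  (forall s : A, (forall q, ~ Xs act s q) <-> (exists n : nat, s ^+ n = 0)) /\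
  (* (3) *)
  PSpec_quasi_compact act /\
  (* (4) *)
  (forall t : A -> Prop, is_radical_diff_ideal act t ->
      is_closed act (Vset act t) /\
      (forall a, bigcap_ideals (Vset act t) a <-> t a)) /\
  (forall Z : (A -> Prop) -> Prop, is_closed act Z ->
      is_radical_diff_ideal act (bigcap_ideals Z) /\
      (forall q, Vset act (bigcap_ideals Z) q <-> Z q)).
Proof.
split.
  move=> s t q; split.
    move=> [[Hq Hs] [_ Ht]]; case: (pp_prime Hact Hq Hs Ht) => g [h H].
    by exists g, h; split.
  move=> [g [h [Hq H]]]; have [[_ [_ HM]] HA] := pp_diff Hq.
  split; split => // Hc; apply: H.
    by rewrite mulrC; apply: HM; apply: HA.
  by apply: HM; apply: HA.
split.
  move=> s; split.
    move=> H; apply: NNPP => Hn.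
    have HI : is_diff_ideal act (fun x : A => x = 0).
      split; [split; [|split]|] => //.
      - by move=> a b -> ->; rewrite addr0.
      - by move=> r a ->; rewrite mulr0.
      - by move=> g a ->; apply: act0 Hact.
    have Hd : disjoint_from (fun x : A => x = 0) (fun x => exists n, x = s ^+ n).
      by move=> x -> [n Hn0]; apply: Hn; exists n.
    case: (exists_pp HI (pow_mc s) Hd) => q [Hq [_ Hdq]].
    apply: (H q); split => // Hs; apply: (Hdq s Hs); exists 1%N; by rewrite expr1.
  move=> [n Hn] q [Hq Hs]; apply: Hs; apply: (pp_rad (n:=n) Hact Hq).
  by rewrite Hn; have [[H0 _] _] := pp_diff Hq.
split.
  move=> I E Hcov.
  pose K := gen act (fun e => exists i, E i e).
  have K1 : K 1.
    apply: NNPP => HK.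
    have HS1 : is_mult_closed (fun x : A => x = 1).
      by split => // x y -> ->; rewrite mul1r.
    have Hd : disjoint_from K (fun x : A => x = 1) by move=> x Hx Hx1; apply: HK; rewrite -Hx1.
    case: (exists_pp (gen_diff _ Hact) HS1 Hd) => q [Hq [Hsub _]].
    case: (Hcov q Hq) => i Hi; apply: Hi; split => // a Ha; apply: Hsub.
    by apply: (gen_incl Hact); exists i.
  case: K1 => l [Hl Hl1].
  case: (extract_list Hl) => li Hli.
  exists li => q Hq; apply: NNPP => Hn.
  apply: (pp_not1 Hq); rewrite Hl1; apply: (lc_in (pp_diff Hq)) => p Hp.
  case: (Hli p Hp) => i [Hi Hei].
  have HV : Vset act (E i) q by apply: NNPP => HV; apply: Hn; exists i.
  by apply: HV.2.
split.
  move=> t [Ht Hrad]; split; first by exists t.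
  move=> a; split; last by move=> Ha q [_ Hq]; apply: Hq.
  move=> Hall; apply: NNPP => Ha.
  have Hd : disjoint_from t (fun x => exists n, x = a ^+ n).
    by move=> x Hx [n Hxn]; apply: Ha; apply: (Hrad a n); rewrite -Hxn.
  case: (exists_pp Ht (pow_mc a) Hd) => q [Hq [Hsub Hdq]].
  apply: (Hdq a); first by apply: Hall; split.
  by exists 1%N; rewrite expr1.
move=> Z [E HZ].
have ZP : forall q, Z q -> pseudoprime act q by move=> q /HZ [].
split; [split; [split; [split; [|split]|]|]|].
- by move=> q /ZP /pp_diff [[H0 _] _].
- by move=> a b Ha Hb q Zq; have [[_ [HD _]] _] := pp_diff (ZP q Zq); apply: HD; [apply: Ha|apply: Hb].
- by move=> r a Ha q Zq; have [[_ [_ HM]] _] := pp_diff (ZP q Zq); apply: HM; apply: Ha.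
- by move=> g a Ha q Zq; have [_ HA] := pp_diff (ZP q Zq); apply: HA; apply: Ha.
- by move=> a n Ha q Zq; apply: (pp_rad (n:=n) Hact (ZP q Zq)); apply: Ha.
move=> q; split.
  move=> [Hq Hsub]; apply/HZ; split => // a Ea; apply: Hsub => q' Zq'.
  by have [_ H] := (HZ q').1 Zq'; apply: H.
by move=> Zq; split; [apply: ZP|move=> a Ha; apply: Ha].
Qed.
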